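(* Let $\nabla$ be a metric connection on an anchored metric bundle $(E,\langle\cdot,\cdot\rangle,a_E)$ over $M$, and let $\circ^\nabla$ be the bracket $\langle e_1\circ^\nabla e_2,e_3\rangle=\langle\nabla_{e_1}e_2,e_3\rangle-\langle\nabla_{e_2}e_1,e_3\rangle+\langle\nabla_{e_3}e_1,e_2\rangle$. Then $(E,\langle\cdot,\cdot\rangle,\circ^\nabla,a_E)$ is a pre-Courant algebroid if and only if either of the following equivalent conditions holds: (1) for all $e_1,e_2\in\Gamma(E)$ the operator $C^\nabla(e_1,e_2):\Gamma(E)\to\Gamma(E)$ is $C^\infty(M)$-linear; (2) $\mathcal{D}(f)\circ^\nabla e=0$ for all $e\in\Gamma(E)$ and $f\in C^\infty(M)$.
   Context: An anchored metric bundle: a vector bundle $E\to M$ with pseudo-metric $\langle\cdot,\cdot\rangle$ and bundle map $a_E:E\to TM$. A metric connection: $\mathbb{R}$-bilinear $\nabla$ with $\nabla_{fe_1}e_2=f\nabla_{e_1}e_2$, $\nabla_{e_1}(fe_2)=a_E(e_1)(f)e_2+f\nabla_{e_1}e_2$, $a_E(e_1)\langle e_2,e_3\rangle=\langle\nabla_{e_1}e_2,e_3\rangle+\langle e_2,\nabla_{e_1}e_3\rangle$. $\mathcal{D}:C^\infty(M)\to\Gamma(E)$ is defined by $\langle\mathcal{D}(f),e\rangle=a_E(e)(f)$. The Courant curvature is $C^\nabla(e_1,e_2)=\nabla_{e_1}\nabla_{e_2}-\nabla_{e_2}\nabla_{e_1}-\nabla_{e_1\circ^\nabla e_2}$. $(E,\langle\cdot,\cdot\rangle,\circ^\nabla,a_E)$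 is always a metric algebroid (i.e. $a_E(e)\langle h_1,h_2\rangle=\langle e\circ h_1,h_2\rangle+\langle h_1,e\circ h_2\rangle$ and $e\circ e=\tfrac12\mathcal{D}\langle e,e\rangle$); a pre-Courant algebroid is a metric algebroid with $a_E(e_1\circ e_2)=[a_E(e_1),a_E(e_2)]$ for all $e_1,e_2$. *)

(* Defs.v *)
(* Algebraic model of an anchored metric bundle:
   A   = C^oo(M), a commutative R-algebra of functions (R a real field, e.g. the reals),
         which is reduced (C^oo(M) has no nonzero nilpotents);
   V   = Gamma(E), an A-module;
   vector fields on M = R-linear derivations of A;
   anchor a : V -> (A -> A), A-linear in the section, each a e a derivation;
   pairing p : V -> V -> A symmetric, A-bilinear, nondegenerate. *)
From HB Require Import structures.
From mathcomp Require Import all_boot all_order all_algebra.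
Set Implicit Arguments. Unset Strict Implicit. Unset Printing Implicit Defensive.
Import Order.TTheory GRing.Theory Num.Theory.
Local Open Scope ring_scope.

Section Defs.
Variables (R : realFieldType) (A : comAlgType R) (V : lmodType A).

Definition reduced_ring : Prop := forall x : A, x * x = 0 -> x = 0.

Definition is_anchor (a : V -> A -> A) : Prop :=
  (forall (f : A) (e1 e2 : V) (g : A), a (f *: e1 + e2) g = f * a e1 g + a e2 g) /\
  (forall (e : V) (c : R) (g h : A), a e (c *: g + h) = c *: a e g + a e h) /\
  (forall (e : V) (g h : A), a e (g * h) = a e g * h + g * a e h).

Definition is_pseudo_metric (p : V -> V -> A) : Prop :=
  (forall e h, p e h = p h e) /\
  (forall (f : A) e1 e2 h, p (f *: e1 + e2) h = f * p e1 h + p e2 h) /\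
  (forall e, (forall h, p e h = 0) -> e = 0).

Definition is_metric_connection (p : V -> V -> A) (a : V -> A -> A)
    (nabla : V -> V -> V) : Prop :=
  (forall e1 e1' e2, nabla (e1 + e1') e2 = nabla e1 e2 + nabla e1' e2) /\
  (forall e1 e2 e2', nabla e1 (e2 + e2') = nabla e1 e2 + nabla e1 e2') /\
  (forall (f : A) e1 e2, nabla (f *: e1) e2 = f *: nabla e1 e2) /\
  (forall (f : A) e1 e2, nabla e1 (f *: e2) = a e1 f *: e2 + f *: nabla e1 e2) /\
  (forall e1 e2 e3, a e1 (p e2 e3) = p (nabla e1 e2) e3 + p e2 (nabla e1 e3)).

Definition is_D (p : V -> V -> A) (a : V -> A -> A) (D : A -> V) : Prop :=
  forall f e, p (D f) e = a e f.

Definition is_circ_nabla (p : V -> V -> A) (nabla : V -> V -> V)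
    (circ : V -> V -> V) : Prop :=
  forall e1 e2 e3,
    p (circ e1 e2) e3 = p (nabla e1 e2) e3 - p (nabla e2 e1) e3 + p (nabla e3 e1) e2.

Definition courant_curvature (nabla : V -> V -> V) (circ : V -> V -> V)
    (e1 e2 e3 : V) : V :=
  nabla e1 (nabla e2 e3) - nabla e2 (nabla e1 e3) - nabla (circ e1 e2) e3.

Definition Alinear (F : V -> V) : Prop :=
  forall (f : A) e e', F (f *: e + e') = f *: F e + F e'.

Definition is_metric_algebroid (p : V -> V -> A) (circ : V -> V -> V)
    (a : V -> A -> A) (D : A -> V) : Prop :=
  (forall e h1 h2, a e (p h1 h2) = p (circ e h1) h2 + p h1 (circ e h2)) /\
  (forall e, circ e e = ((2 : R)^-1)%:A *: D (p e e)).

Definition is_pre_courant (p : V -> V -> A) (circ : V -> V -> V)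
    (a : V -> A -> A) (D : A -> V) : Prop :=
  is_metric_algebroid p circ a D /\
  (forall e1 e2 (f : A), a (circ e1 e2) f = a e1 (a e2 f) - a e2 (a e1 f)).

End Defs.

(* Main.v *)
Require Import Defs.
From HB Require Import structures.
From mathcomp Require Import all_boot all_order all_algebra.
From mathcomp Require Import ring.
Import Order.TTheory GRing.Theory Num.Theory.
Local Open Scope ring_scope.

Theorem proposition3p8 (R : realFieldType) (A : comAlgType R) (V : lmodType A)
    (p : V -> V -> A) (a : V -> A -> A) (nabla : V -> V -> V)
    (D : A -> V) (circ : V -> V -> V) :
  reduced_ring A ->
  is_pseudo_metric p -> is_anchor a -> is_metric_connection p a nabla ->
  is_D p a D -> is_circ_nabla p nabla circ ->
  (is_pre_courant p circ a D <->
     (forall e1 e2, Alinear (courant_curvature nabla circ e1 e2))) /\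
  (is_pre_courant p circ a D <->
     (forall (f : A) (e : V), circ (D f) e = 0)).
Proof.
move=> Hred [psym [plin pnd]] [alin [aR aL]] [nD1 [nD2 [nZ1 [nZ2 nmet]]]] HD Hc.
have p0 : forall h, p 0 h = 0.
  move=> h; have E := plin 1 0 0 h; rewrite scaler0 add0r mul1r in E.
  by apply: (@addrI _ (p 0 h)); rewrite addr0 -E.
have pD : forall e1 e2 h, p (e1 + e2) h = p e1 h + p e2 h.
  by move=> e1 e2 h; have := plin 1 e1 e2 h; rewrite scale1r mul1r.
have pZ : forall f e h, p (f *: e) h = f * p e h.
  by move=> f e h; rewrite -[f *: e]addr0 plin p0 addr0.
have pN : forall e h, p (- e) h = - p e h.
  by move=> e h; rewrite -scaleN1r pZ mulN1r.
have pB : forall e1 e2 h, p (e1 - e2) h = p e1 h - p e2 h.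
  by move=> e1 e2 h; rewrite pD pN.
have pBr : forall e1 e2 h, p h (e1 - e2) = p h e1 - p h e2.
  by move=> e1 e2 h; rewrite psym pB psym [p e2 _]psym.
have ndeq : forall x y, (forall h, p x h = p y h) -> x = y.
  move=> x y H; apply/eqP; rewrite -subr_eq0; apply/eqP; apply: pnd => h.
  by rewrite pB H subrr.
have n02 : forall e, nabla e 0 = 0.
  move=> e; have := nD2 e 0 0; rewrite addr0 => E.
  by apply: (@addrI _ (nabla e 0)); rewrite addr0 -E.
have nN2 : forall e x, nabla e (- x) = - nabla e x.
  move=> e x; apply/eqP; rewrite -subr_eq0 opprK -nD2 addNr n02 //.
have nB2 : forall e x y, nabla e (x - y) = nabla e x - nabla e y.
  by move=> e x y; rewrite nD2 nN2.
have polar : forall e1 e2, circ e1 e2 + circ e2 e1 = D (p e1 e2).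
  move=> e1 e2; apply: ndeq => h.
  rewrite pD !Hc HD nmet [p e1 (nabla h e2)]psym; ring.
have malg : forall e h1 h2, a e (p h1 h2) = p (circ e h1) h2 + p h1 (circ e h2).
  move=> e h1 h2; rewrite [p h1 (circ e h2)]psym !Hc nmet [p h1 (nabla e h2)]psym; ring.
have key : forall e1 e2 f, a (circ e1 e2) f =
    a e1 (a e2 f) - a e2 (a e1 f) + p (circ (D f) e1) e2.
  move=> e1 e2 f; rewrite -HD psym.
  have m := malg e1 e2 (D f).
  have pl := polar e1 (D f).
  have ce : circ e1 (D f) = D (p e1 (D f)) - circ (D f) e1 by rewrite -pl addrK.
  rewrite [p e2 (D f)]psym HD ce pBr [p e2 (D _)]psym HD [p e1 (D f)]psym HD
     [p e2 (circ _ _)]psym in m.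
  rewrite m; ring.
have h2 : ((2 : R)^-1)%:A * 2 = 1 :> A.
  rewrite -scalerAl mul1r -[2 : A]scaler_nat scalerA mulVf ?scale1r //.
  by rewrite pnatr_eq0.
have cee : forall e, circ e e = ((2 : R)^-1)%:A *: D (p e e).
  move=> e; apply: ndeq => h.
  rewrite pZ HD nmet [p e (nabla h e)]psym Hc subrr add0r.
  have -> : forall x : A, x + x = x * 2 by move=> x; ring.
  by rewrite mulrCA h2 mulr1.
have curv : forall e1 e2 f e3 e',
   courant_curvature nabla circ e1 e2 (f *: e3 + e') =
   f *: courant_curvature nabla circ e1 e2 e3 + courant_curvature nabla circ e1 e2 e'
     - p (circ (D f) e1) e2 *: e3.
  move=> e1 e2 f e3 e'; apply: ndeq => h; rewrite /courant_curvature.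
  rewrite !nD2 !nZ2 !nD2 !nZ2 !pB !pD !pZ !pB !pN key; ring.
have PC2 : is_pre_courant p circ a D <-> (forall f e, circ (D f) e = 0).
  split.
    move=> [_ Han] f e; apply: pnd => h.
    have E := key e h f; rewrite Han in E.
    by apply: (@addrI _ (a e (a h f) - a h (a e f))); rewrite addr0 -E.
  move=> H; split; first by split.
  by move=> e1 e2 f; rewrite key H p0 addr0.
have C2 : (forall e1 e2, Alinear (courant_curvature nabla circ e1 e2)) <->
          (forall f e, circ (D f) e = 0).
  split.
    move=> H f e; apply: pnd => h.
    set w := circ (D f) e.
    have Z : p w h *: w = 0.
      have := curv e h f w 0; rewrite H.
      by move/eqP; rewrite eq_sym -subr_eq0 addrC addKr oppr_eq0 => /eqP.
    apply: Hred.
    by have := congr1 (fun v => p v h) Z; rewrite /= pZ p0.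
  by move=> H e1 e2 f e e'; rewrite curv H p0 scale0r subr0.
by split; [rewrite PC2 C2 | rewrite PC2].
Qed.
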